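(* For any simple undirected graph $G$ with $m$ edges, $$\Phi_1=\sum_{\{st,uv\}\in Q}(k_sk_t+k_uk_v)=(m+1)\psi-\sum_{st\in E}k_sk_t(k_s+k_t).$$
   Context: $k_x$ is the degree of $x$, $\psi=\sum_{st\in E}k_sk_t$. $Q$ is the set of unordered pairs $\{st,uv\}$ of edges with $s,t,u,v$ pairwise distinct. *)

(* Defs.v *)
From mathcomp Require Import all_boot all_order all_algebra.
Set Implicit Arguments. Unset Strict Implicit. Unset Printing Implicit Defensive.

(* A simple undirected graph on a finite vertex type T is given by a
   symmetric, irreflexive adjacency relation g : rel T. *)
Section Graph.
Variables (T : finType) (g : rel T).

Definition edges : {set {set T}} :=
  [set e : {set T} | [exists s, exists t, g s t && (e == [set s; t])]].

Definition nedges : nat := #|edges|.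

Definition deg (x : T) : nat := #|[set y | g x y]|.

Definition edge_prod (e : {set T}) : nat := \prod_(x in e) deg x.

Definition edge_sum (e : {set T}) : nat := \sum_(x in e) deg x.

Definition psi : nat := \sum_(e in edges) edge_prod e.

(* Q : unordered pairs {st, uv} of edges with s,t,u,v pairwise distinct,
   i.e. pairs of vertex-disjoint edges *)
Definition Qpairs : {set {set {set T}}} :=
  [set p : {set {set T}} | [exists e in edges, exists f in edges,
     (e :&: f == set0) && (p == [set e; f])]].

Definition Phi1 : nat := \sum_(p in Qpairs) \sum_(e in p) edge_prod e.

End Graph.

(* Main.v *)
Require Import Defs.
From mathcomp Require Import all_boot all_order all_algebra.
Set Implicit Arguments. Unset Strict Implicit.

Section Aux.
Variables (T : finType) (g : rel T) (gsym : symmetric g) (girr : irreflexive g).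

Lemma edgeP e : reflect (exists s t, [/\ g s t & e = [set s; t]]) (e \in edges g).
Proof.
rewrite inE; apply: (iffP existsP) => [[s /existsP [t /andP [gst /eqP ->]]]|[s [t [gst ->]]]].
  by exists s, t.
by exists s; apply/existsP; exists t; rewrite gst eqxx.
Qed.

Lemma in_sel (P : pred {set T}) f :
  (f \in [set f in edges g | P f]) = (f \in edges g) && P f.
Proof. by rewrite !inE. Qed.

Lemma neq_of_g s t : g s t -> s != t.
Proof. by move=> gst; apply/eqP => E; move: gst; rewrite E girr. Qed.

Lemma edge_sum2 s t : g s t -> edge_sum g [set s; t] = deg g s + deg g t.
Proof.
move=> gst; rewrite /edge_sum big_setU1 ?big_set1 //.
by rewrite in_set1 neq_of_g.
Qed.

Lemma card_inc s : #|[set f in edges g | s \in f]| = deg g s.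
Proof.
have -> : [set f in edges g | s \in f] = (fun y => [set s; y]) @: [set y | g s y].
  apply/setP => f; rewrite inE; apply/andP/imsetP.
    case=> /edgeP [a [b [gab ->]]] /set2P [->|->].
      by exists b; rewrite ?inE.
    by exists a; rewrite ?inE 1?gsym // setUC.
  case=> y; rewrite inE => gsy ->; split; last exact: set21.
  by apply/edgeP; exists s, y.
rewrite card_in_imset // => y1 y2; rewrite !inE => g1 g2 E.
have : y1 \in [set s; y2] by rewrite -E set22.
case/set2P => // E1; move: g1; by rewrite E1 girr.
Qed.

Lemma card_meet s t : g s t ->
  #|[set f in edges g | [set s; t] :&: f != set0]| = (deg g s + deg g t).-1.
Proof.
move=> gst.
have -> : [set f in edges g | [set s; t] :&: f != set0] =
   [set f in edges g | s \in f] :|: [set f in edges g | t \in f].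
  apply/setP => f; rewrite !inE.
  case: [exists s0, exists t0, g s0 t0 && (f == [set s0; t0])] => //=.
  apply/idP/idP.
    case/set0Pn => x; rewrite !inE => /andP [/orP [/eqP ->|/eqP ->] ->] //.
    by rewrite orbT.
  case/orP => [Hs|Ht]; apply/set0Pn.
    by exists s; rewrite !inE eqxx.
  by exists t; rewrite !inE eqxx orbT.
have HI : [set f in edges g | s \in f] :&: [set f in edges g | t \in f] = [set [set s; t]].
  apply/setP => f; rewrite in_setI !in_sel in_set1; apply/idP/idP.
    case/andP => /andP [/edgeP [a [b [gab ->]]] Hs] /andP [_ Ht].
    move: Hs Ht => /set2P [] Ea /set2P [] Eb.
    - by move: (neq_of_g gst); rewrite Ea Eb eqxx.
    - by rewrite Ea Eb.
    - by rewrite Ea Eb setUC.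
    - by move: (neq_of_g gst); rewrite Ea Eb eqxx.
  move/eqP ->; rewrite set21 set22 andbT andbb.
  by apply/edgeP; exists s, t.
by rewrite cardsU HI !card_inc cards1 subn1.
Qed.

Lemma card_disj e : e \in edges g ->
  #|[set f in edges g | e :&: f == set0]| + edge_sum g e = nedges g + 1.
Proof.
case/edgeP => [s [t [gst ->]]].
rewrite edge_sum2 //.
have H := cardsID [set f | [set s; t] :&: f == set0] (edges g).
have E1 : edges g :&: [set f | [set s; t] :&: f == set0] =
          [set f in edges g | [set s; t] :&: f == set0].
  by apply/setP => f; rewrite !inE.
have E2 : edges g :\: [set f | [set s; t] :&: f == set0] =
          [set f in edges g | [set s; t] :&: f != set0].
  by apply/setP => f; rewrite !inE andbC.
rewrite E1 E2 card_meet // in H.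
rewrite /nedges -H.
have : 0 < deg g s.
  by rewrite /deg; apply/card_gt0P; exists t; rewrite inE.
case: (deg g s) => // n _ /=.
by rewrite addSn /= -addnA addn1.
Qed.

Lemma card_Q e : e \in edges g ->
  #|[set p in Qpairs g | e \in p]| = #|[set f in edges g | e :&: f == set0]|.
Proof.
move=> He.
have ne : e != set0.
  by case/edgeP: He => s [t [_ ->]]; apply/set0Pn; exists s; exact: set21.
have -> : [set p in Qpairs g | e \in p] =
          (fun f => [set e; f]) @: [set f in edges g | e :&: f == set0].
  apply/setP => p; rewrite inE; apply/andP/imsetP.
    case; rewrite inE => /existsP [a /andP [Ha /existsP [b /andP [Hb /andP [dab /eqP ->]]]]].
    case/set2P => ->.
      by exists b => //; rewrite in_sel Hb.
    by exists a; [rewrite in_sel Ha setIC | rewrite setUC].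
  case=> f; rewrite in_sel => /andP [Hf dis] ->; split; last exact: set21.
  rewrite inE; apply/existsP; exists e; rewrite He /=.
  by apply/existsP; exists f; rewrite Hf dis eqxx.
rewrite card_in_imset // => f1 f2; rewrite !in_sel => /andP [_ d1] /andP [_ d2] E.
have : f1 \in [set e; f2] by rewrite -E set22.
case/set2P => // E1; move: d1; rewrite E1 setIid => /eqP E0.
by move: ne; rewrite E0 eqxx.
Qed.

Lemma Q_sub p e : p \in Qpairs g -> e \in p -> e \in edges g.
Proof.
rewrite inE => /existsP [a /andP [Ha /existsP [b /andP [Hb /andP [_ /eqP ->]]]]].
by case/set2P => ->.
Qed.

Lemma Phi1_eq : Phi1 g = \sum_(e in edges g)
   #|[set f in edges g | e :&: f == set0]| * edge_prod g e.
Proof.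
rewrite /Phi1.
transitivity (\sum_(p in Qpairs g) \sum_(e in edges g | e \in p) edge_prod g e).
  apply: eq_bigr => p Hp; apply: eq_bigl => e; case He: (e \in p); rewrite ?andbF ?andbT //.
  by rewrite (Q_sub Hp He).
rewrite (exchange_big_dep (fun e => e \in edges g)) /=; last by move=> i j _ /andP [].
apply: eq_bigr => e He.
rewrite -(card_Q He) -sum_nat_const.
apply: eq_bigl => p; by rewrite in_set He.
Qed.

End Aux.

Local Open Scope ring_scope.

Theorem proposition7 (T : finType) (g : rel T) (gsym : symmetric g)
    (girr : irreflexive g) :
  (Phi1 g)%:Z =
    ((nedges g + 1) * psi g)%:Z
    - (\sum_(e in edges g) edge_prod g e * edge_sum g e)%N%:Z.
Proof.
have H : (Phi1 g + \sum_(e in edges g) edge_prod g e * edge_sum g e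
          = (nedges g + 1) * psi g)%N.
  rewrite Phi1_eq // -big_split /= /psi big_distrr /=.
  apply: eq_bigr => e He.
  by rewrite mulnC -mulnDr (card_disj gsym girr He) mulnC.
by rewrite -H PoszD GRing.addrK.
Qed.
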